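(* Let $n\geq 0$ and $0\leq m\leq n$ be integers. Then \[ \sum_{\substack{k=0\\ k\neq m}}^{n}{n\brack k}\frac{(q/z;q)_k (z;q)_{n-k}}{1-q^{k-m}} z^k =(-1)^m q^{\binom{m+1}{2}}{n\brack m}(zq^{-m};q)_n \left(\sum_{k=0}^{n-1} \frac{zq^{k-m}}{1-zq^{k-m}}- \sum_{\substack{k=0\\ k\neq m}}^{n} \frac{q^{k-m}}{1-q^{k-m}} \right). \]
   Context: For $N\geq 0$, $(x;q)_N=(1-x)(1-xq)\cdots(1-xq^{N-1})$ (with $(x;q)_0=1$). The $q$-binomial coefficient is ${n\brack k}=\frac{(q;q)_n}{(q;q)_k(q;q)_{n-k}}$ for $0\leq k\leq n$ and $0$ otherwise. The identity is one of rational functions in $q$ and $z$. *)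

(* Defs.v *)
From HB Require Import structures.
From mathcomp Require Import all_boot all_order all_algebra.
Set Implicit Arguments. Unset Strict Implicit. Unset Printing Implicit Defensive.
Import Order.TTheory GRing.Theory Num.Theory.
Local Open Scope ring_scope.

Definition qpoch (R : nzRingType) (x q : R) (N : nat) : R :=
  \prod_(i < N) (1 - x * q ^+ i).

Definition qbinom (F : fieldType) (q : F) (n k : nat) : F :=
  if (k <= n)%N then qpoch q q n / (qpoch q q k * qpoch q q (n - k)) else 0.

(* Main.v *)
Require Import Defs.
From HB Require Import structures.
From mathcomp Require Import all_boot all_order all_algebra.
From mathcomp Require Import ring zify.
Import Order.TTheory GRing.Theory Num.Theory.
Local Open Scope ring_scope.

Section Helpers.
Set Implicit Arguments. Unset Strict Implicit.

Definition lf (F : fieldType) (c : F) : {poly F} := 1 - c%:P * 'X.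

Lemma lfE (F : fieldType) (c x : F) : (lf c).[x] = 1 - c * x.
Proof. by rewrite /lf !hornerE. Qed.

Lemma lfD (F : fieldType) (c : F) : (lf c)^`() = - c%:P.
Proof. by rewrite /lf derivB derivC deriv_mulC derivX mulr1 sub0r. Qed.

Lemma size_lf (F : fieldType) (c : F) : (size (lf c) <= 2)%N.
Proof.
rewrite /lf; apply: leq_trans (size_polyD _ _) _.
rewrite geq_max size_polyC size_polyN; apply/andP; split; first by case: (_ != _).
apply: leq_trans (size_polyMleq _ _) _; rewrite size_polyX.
by rewrite size_polyC; case: (_ != _).
Qed.

Lemma size_prod_lf (F : fieldType) (I : finType) (P : pred I) (c : I -> F) :
  (size (\prod_(i | P i) lf (c i))%R <= #|P|.+1)%N.
Proof.
have -> : #|P| = (\sum_(i | P i) 1)%N by rewrite sum1_card.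
apply: (@big_ind2 {poly F} nat (fun (p : {poly F}) (d : nat) => (size p <= d.+1)%N)
   1 *%R 0%N addn _ _ _ _ P (fun i => lf (c i)) (fun _ => 1%N)).
- by rewrite size_poly1.
- move=> p1 d1 p2 d2 h1 h2; apply: leq_trans (size_polyMleq _ _) _.
  have := leq_add h1 h2; rewrite addSn addnS; case: (size p1 + size p2)%N => //= k hk; exact: hk.
- by move=> i _; apply: (size_lf (c i)).
Qed.

Lemma dlog_seq (F : fieldType) (I : Type) (r : seq I) (P : pred I) (c : I -> F) x :
  (forall i, P i -> 1 - c i * x != 0) ->
  (\prod_(i <- r | P i) lf (c i))^`().[x] =
  (\prod_(i <- r | P i) (1 - c i * x)) * \sum_(i <- r | P i) (- c i) / (1 - c i * x).
Proof.
move=> hP; elim: r => [|a r IH]; first by rewrite !big_nil derivC horner0 mul1r.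
rewrite !big_cons; case: (boolP (P a)) => Pa //.
rewrite derivM hornerD !hornerM IH lfD lfE hornerN hornerC horner_prod.
under [\prod_(_ <- _ | _) (lf _).[x]]eq_bigr => i _ do rewrite lfE.
set A := \prod_(_ <- _ | _) _; set S := \sum_(_ <- _ | _) _.
have ha := hP a Pa.
by field.
Qed.


Lemma neq1 (F : fieldType) (q y : F) (n : nat) (hqy : q * y = 1)
  (hq : forall j : nat, (0 < j <= n)%N -> q ^+ j != 1) (j k : nat) :
  (j <= n)%N -> (k <= n)%N -> q ^+ j * y ^+ k = 1 -> j = k.
Proof.
move=> hj hk e.
have qyk : forall a, q ^+ a * y ^+ a = 1 by move=> a; rewrite -exprMn hqy expr1n.
case: (ltngtP j k) => // h.
- have [d hd] : exists d, k = (j + d)%N by exists (k - j)%N; rewrite subnKC // ltnW.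
  subst k.
  move: e; rewrite exprD mulrA qyk mul1r => e.
  have h2 : q ^+ d = 1 by rewrite -(qyk d) e mulr1.
  have : (0 < d <= n)%N by apply/andP; split; lia.
  by move=> /hq; rewrite h2 eqxx.
- have [d hd] : exists d, j = (k + d)%N by exists (j - k)%N; rewrite subnKC // ltnW.
  subst j.
  move: e; rewrite exprD mulrAC qyk mul1r => e.
  have : (0 < d <= n)%N by apply/andP; split; lia.
  by move=> /hq; rewrite e eqxx.
Qed.

Definition Ep (F : fieldType) (q : F) (n : nat) (k : 'I_n.+1) : {poly F} :=
  \prod_(j < n.+1 | j != k) lf (q ^+ j).
Definition Pp (F : fieldType) (q z : F) (n : nat) : {poly F} :=
  \prod_(i < n) lf (z * q ^+ i).
Definition bc (F : fieldType) (q z y : F) (n : nat) (k : 'I_n.+1) : F :=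
  (Pp q z n).[y ^+ k] / (Ep q k).[y ^+ k].

Lemma Ep_eval (F : fieldType) (q x : F) (n : nat) (k : 'I_n.+1) :
  (Ep q k).[x] = \prod_(j < n.+1 | j != k) (1 - q ^+ j * x).
Proof. by rewrite /Ep horner_prod; apply: eq_bigr => j _; rewrite lfE. Qed.

Lemma Ep_eval0 (F : fieldType) (q y : F) (n : nat) (k l : 'I_n.+1) :
  q * y = 1 -> l != k -> (Ep q k).[y ^+ l] = 0.
Proof.
move=> hqy hlk; rewrite Ep_eval (bigD1 l) //= -exprMn hqy expr1n subrr.
by rewrite mul0r.
Qed.

Lemma Ep_neq0 (F : fieldType) (q y : F) (n : nat) (k : 'I_n.+1)
  (hqy : q * y = 1) (hq : forall j : nat, (0 < j <= n)%N -> q ^+ j != 1) :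
  (Ep q k).[y ^+ k] != 0.
Proof.
rewrite Ep_eval; apply/prodf_neq0 => j hj; rewrite subr_eq0 eq_sym.
apply/eqP => e; move/eqP: hj; apply; apply: val_inj.
by apply: (neq1 hqy hq _ _ e); rewrite -ltnS ltn_ord.
Qed.

Lemma interp (F : fieldType) (q z y : F) (n : nat)
  (hqy : q * y = 1) (hq : forall j : nat, (0 < j <= n)%N -> q ^+ j != 1) :
  Pp q z n = \sum_(k < n.+1) bc q z y k *: Ep q k.
Proof.
apply/eqP; rewrite -subr_eq0; apply/negPn/negP => hD.
have := max_poly_roots hD (rs := mkseq (fun i => y ^+ i) n.+1).
rewrite size_mkseq.
have -> : all (root (Pp q z n - \sum_(k < n.+1) bc q z y k *: Ep q k))
           (mkseq (fun i => y ^+ i) n.+1).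
  apply/allP => x /mapP [i]; rewrite mem_iota add0n => /andP[_ hi] ->.
  rewrite /root hornerD hornerN horner_sum (bigD1 (Ordinal hi)) //= big1.
    rewrite addr0 hornerZ /bc divfK ?subrr //.
    exact: (Ep_neq0 (Ordinal hi) hqy hq).
  by move=> k hk; rewrite hornerZ (@Ep_eval0 _ q y n k (Ordinal hi) hqy) ?mulr0 // eq_sym.
have -> : uniq (mkseq (fun i => y ^+ i) n.+1).
  rewrite /mkseq map_inj_in_uniq ?iota_uniq // => i j.
  rewrite !mem_iota !add0n => /andP[_ hi] /andP[_ hj] e.
  apply: (neq1 hqy hq); [by rewrite -ltnS | by rewrite -ltnS |].
  by rewrite -e -exprMn hqy expr1n.
move=> /(_ isT isT); apply/negP; rewrite -leqNgt.
apply: leq_trans (size_polyD _ _) _; rewrite geq_max; apply/andP; split.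
  apply: leq_trans (size_prod_lf _ _) _; by rewrite cardT size_enum_ord.
rewrite size_polyN.
apply: (big_ind (fun p : {poly F} => (size p <= n.+1)%N)).
- by rewrite size_poly0.
- move=> p1 p2 h1 h2; apply: leq_trans (size_polyD _ _) _; by rewrite geq_max h1.
move=> k _; apply: leq_trans (size_scale_leq _ _) _.
apply: leq_trans (size_prod_lf _ _) _.
rewrite ltnS; have h := cardC1 k; rewrite card_ord /= in h.
by rewrite -[X in (_ <= X)%N]h; apply: eq_leq; apply: eq_card => j.
Qed.


Lemma main_id (F : fieldType) (q z y : F) (n : nat) (mo : 'I_n.+1)
  (hqy : q * y = 1) (hq : forall j : nat, (0 < j <= n)%N -> q ^+ j != 1)
  (hz : forall i : nat, (i < n)%N -> 1 - z * q ^+ i * y ^+ mo != 0) :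
  \sum_(k < n.+1 | k != mo) bc q z y k / (1 - q ^+ k * y ^+ mo)
  = bc q z y mo * (\sum_(i < n) z * q ^+ i * y ^+ mo / (1 - z * q ^+ i * y ^+ mo)
      - \sum_(k < n.+1 | k != mo) q ^+ k * y ^+ mo / (1 - q ^+ k * y ^+ mo)).
Proof.
set x := y ^+ mo.
have hx : q ^+ mo * x = 1 by rewrite /x -exprMn hqy expr1n.
have hne : forall j : 'I_n.+1, j != mo -> 1 - q ^+ j * x != 0.
  move=> j hj; rewrite subr_eq0 eq_sym; apply/eqP => e; move/eqP: hj; apply.
  by apply: val_inj; apply: (neq1 hqy hq _ _ e); rewrite -ltnS ltn_ord.
set Em := (Ep q mo).[x].
have hEm : Em != 0 by apply: Ep_neq0.
have hP : (Pp q z n).[x] = bc q z y mo * Em by rewrite /bc divfK.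
have h1 : (Pp q z n)^`().[x] =
   (Pp q z n).[x] * \sum_(i < n) - (z * q ^+ i) / (1 - z * q ^+ i * x).
  rewrite /Pp dlog_seq ?horner_prod; last by move=> i _; exact: (hz i (ltn_ord i)).
  congr (_ * _); apply: eq_bigr => i _; by rewrite lfE.
have h2 : (Pp q z n)^`().[x] = \sum_(k < n.+1) bc q z y k * (Ep q k)^`().[x].
  rewrite {1}(interp z hqy hq) raddf_sum horner_sum; apply: eq_bigr => k _.
  rewrite /=.
  by rewrite derivZ hornerZ.
have h3 : (Ep q mo)^`().[x] = Em * \sum_(j < n.+1 | j != mo) - q ^+ j / (1 - q ^+ j * x).
  by rewrite /Ep dlog_seq // /Em Ep_eval.
have h4 : forall k : 'I_n.+1, k != mo ->
    (Ep q k)^`().[x] = - q ^+ mo * Em / (1 - q ^+ k * x).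
  move=> k hk.
  have hmk : mo != k by rewrite eq_sym.
  set R := \prod_(j < n.+1 | (j != k) && (j != mo)) lf (q ^+ j).
  have -> : Ep q k = lf (q ^+ mo) * R by rewrite /Ep (bigD1 mo).
  have -> : Em = (1 - q ^+ k * x) * R.[x].
    rewrite /Em Ep_eval (bigD1 k) //= /R horner_prod; congr (_ * _).
    by apply: eq_big => [j|j _]; [rewrite andbC | rewrite lfE].
  rewrite derivM hornerD !hornerM lfD lfE hx subrr mul0r addr0 hornerN hornerC.
  by rewrite [(1 - _) * _]mulrC mulrA mulfK // hne.
move: h2; rewrite h1 hP (bigD1 mo) //= h3.
have h5 : \sum_(i < n.+1 | i != mo) bc q z y i * (Ep q i)^`().[x]
   = - q ^+ mo * Em * \sum_(k < n.+1 | k != mo) bc q z y k / (1 - q ^+ k * x).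
  rewrite mulr_sumr; apply: eq_bigr => k hk; rewrite h4 //; ring.
rewrite h5.
set S := \sum_(k < n.+1 | k != mo) bc q z y k / (1 - q ^+ k * x).
set SP := \sum_(i < n) - (z * q ^+ i) / (1 - z * q ^+ i * x).
set SE := \sum_(j < n.+1 | j != mo) - q ^+ j / (1 - q ^+ j * x).
have eP : \sum_(i < n) z * q ^+ i * x / (1 - z * q ^+ i * x) = - x * SP.
  rewrite /SP mulr_sumr; apply: eq_bigr => i _; ring.
have eE : \sum_(k < n.+1 | k != mo) q ^+ k * x / (1 - q ^+ k * x) = - x * SE.
  rewrite /SE mulr_sumr; apply: eq_bigr => i _; ring.
rewrite eP eE => e.
have e2 : q ^+ mo * S = - (bc q z y mo * (SP - SE)).
  apply: (mulIf hEm); apply/eqP; rewrite -subr_eq0; apply/eqP.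
  have -> : q ^+ mo * S * Em - - (bc q z y mo * (SP - SE)) * Em
    = bc q z y mo * Em * SP - (bc q z y mo * (Em * SE) + - q ^+ mo * Em * S) by ring.
  by rewrite e subrr.
have -> : S = x * (q ^+ mo * S) by rewrite mulrA [x * _]mulrC hx mul1r.
rewrite e2; ring.
Qed.


Lemma qy_shift (F : fieldType) (q y : F) (a b : nat) :
  q * y = 1 -> q ^+ a * y ^+ (a + b) = y ^+ b.
Proof. by move=> h; rewrite exprD mulrA -exprMn h expr1n mul1r. Qed.

Lemma Pp_split (F : fieldType) (q z y : F) (n : nat) (k : nat) :
  q * y = 1 -> (k <= n)%N ->
  (Pp q z n).[y ^+ k] = (\prod_(t < k) (1 - z * y ^+ t.+1)) * qpoch z q (n - k).
Proof.
move=> hqy hk; rewrite /Pp horner_prod.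
under eq_bigr => i _ do rewrite lfE.
rewrite -(big_mkord xpredT (fun i => 1 - z * q ^+ i * y ^+ k)) (big_cat_nat (leq0n k) hk) /=.
congr (_ * _).
  rewrite big_nat_rev -(big_mkord xpredT (fun t => 1 - z * y ^+ t.+1)).
  apply: eq_big_nat => i /andP[_ hi].
  rewrite add0n -mulrA; congr (1 - z * _).
  by rewrite -{2}(subnK hi) qy_shift.
rewrite -{1}(add0n k) big_addn /qpoch -(big_mkord xpredT (fun i => 1 - z * q ^+ i)).
apply: eq_big_nat => i _.
by rewrite exprD -!mulrA -exprMn hqy expr1n mulr1.
Qed.

Lemma Ep_split (F : fieldType) (q y : F) (n : nat) (k : 'I_n.+1) :
  q * y = 1 ->
  (Ep q k).[y ^+ k] = (\prod_(t < k) (1 - y ^+ t.+1)) * qpoch q q (n - k).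
Proof.
move=> hqy; rewrite Ep_eval.
have hk : (k <= n.+1)%N by apply: ltnW.
rewrite (eq_bigl (fun j : 'I_n.+1 => nat_of_ord j != nat_of_ord k)) //.
rewrite -(big_mkord (fun j => j != nat_of_ord k) (fun j => 1 - q ^+ j * y ^+ k)).
rewrite (big_cat_nat (leq0n k) hk) /= (@big_ltn_cond _ _ _ k n.+1) //= eqxx /=.
congr (_ * _).
  rewrite big_nat_cond.
  rewrite (eq_bigl (fun i => (0 <= i < k)%N && true)); last first.
    move=> i /=; case: (ltnP i k) => h //=.
    by rewrite neq_ltn h.
  rewrite -(big_nat_cond _ _ 0 k xpredT).
  rewrite big_nat_rev -(big_mkord xpredT (fun t => 1 - y ^+ t.+1)).
  apply: eq_big_nat => i /andP[_ hi].
  by rewrite add0n -{2}(subnK hi) qy_shift.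
rewrite big_nat_cond.
rewrite (eq_bigl (fun i => (k.+1 <= i < n.+1)%N && true)); last first.
  move=> i /=; case: (ltnP k i) => h //=.
  by rewrite neq_ltn h orbT.
rewrite -(big_nat_cond _ _ k.+1 n.+1 xpredT).
rewrite -{1}(add0n k.+1) big_addn subSS /qpoch -(big_mkord xpredT (fun i => 1 - q * q ^+ i)).
apply: eq_big_nat => i _.
by rewrite addnS exprS exprD -!mulrA -exprMn hqy expr1n mulr1.
Qed.

Lemma sign_prod (F : fieldType) (q : F) (k : nat) :
  \prod_(t < k) (- q ^+ t.+1) = (-1) ^+ k * q ^+ 'C(k.+1, 2).
Proof.
elim: k => [|k IH]; first by rewrite big_ord0 expr0 mul1r expr0.
rewrite big_ord_recr /= IH [in RHS]binS bin1 exprD !exprS.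
ring.
Qed.

Lemma qpoch_neq0 (F : fieldType) (q : F) (n j : nat)
  (hq : forall j : nat, (0 < j <= n)%N -> q ^+ j != 1) :
  (j <= n)%N -> qpoch q q j != 0.
Proof.
move=> hj; apply/prodf_neq0 => t _; rewrite subr_eq0 eq_sym -exprS.
apply: hq; apply/andP; split => //; apply: leq_trans hj; exact: ltn_ord.
Qed.

Lemma factor_id (F : fieldType) (q z y : F) (t : nat) :
  q * y = 1 -> z != 0 ->
  (1 - z * y ^+ t.+1) * (1 - q * q ^+ t) = (1 - y ^+ t.+1) * (1 - q / z * q ^+ t) * z.
Proof.
move=> hqy hz.
set u := q * q ^+ t; set w := y ^+ t.+1.
have h : u * w = 1 by rewrite /u /w -exprS -exprMn hqy expr1n.
have e : (1 - q / z * q ^+ t) * z = z - u by rewrite mulrBl mul1r mulrAC divfK.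
rewrite -mulrA e; apply/eqP; rewrite -subr_eq0.
have -> : (1 - z * w) * (1 - u) - (1 - w) * (z - u) = (u * w - 1) * (z - 1) by ring.
by rewrite h subrr mul0r.
Qed.

Lemma bc_closed (F : fieldType) (q z y : F) (n : nat) (k : 'I_n.+1)
  (hqy : q * y = 1) (hz : z != 0) (hq : forall j : nat, (0 < j <= n)%N -> q ^+ j != 1) :
  qpoch q q n * bc q z y k
  = qbinom q n k * (qpoch (q / z) q k * qpoch z q (n - k)) * z ^+ k.
Proof.
have hk : (k <= n)%N by rewrite -ltnS.
have hE := Ep_neq0 k hqy hq.
rewrite /bc (Pp_split z hqy hk) Ep_split // /qbinom hk.
move: hE; rewrite Ep_split // => hE.
have hB : \prod_(t < k) (1 - y ^+ t.+1) != 0 by move: hE; rewrite mulf_eq0 negb_or => /andP[].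
have hQnk : qpoch q q (n - k) != 0 by apply: (qpoch_neq0 hq); rewrite leq_subr.
have hQk : qpoch q q k != 0 by apply: (qpoch_neq0 hq).
have key : \prod_(t < k) (1 - z * y ^+ t.+1)
    = \prod_(t < k) (1 - y ^+ t.+1) * qpoch (q / z) q k * z ^+ k / qpoch q q k.
  have ez : z ^+ k = \prod_(t < k) z by rewrite prodr_const card_ord.
  apply: (mulIf hQk); rewrite divfK // /qpoch ez -!big_split /=.
  by apply: eq_bigr => t _; rewrite factor_id.
rewrite key; field.
by rewrite hQk hQnk hB.
Qed.

Lemma bc_m (F : fieldType) (q z y : F) (n : nat) (k : 'I_n.+1)
  (hqy : q * y = 1) (hq0 : q != 0) (hq : forall j : nat, (0 < j <= n)%N -> q ^+ j != 1) :
  qpoch q q n * bc q z y k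
  = (-1) ^+ k * q ^+ 'C(k.+1, 2) * qbinom q n k * qpoch (z * y ^+ k) q n.
Proof.
have hk : (k <= n)%N by rewrite -ltnS.
have hE := Ep_neq0 k hqy hq.
have eP : (Pp q z n).[y ^+ k] = qpoch (z * y ^+ k) q n.
  rewrite /Pp horner_prod /qpoch; apply: eq_bigr => i _; by rewrite lfE mulrAC.
rewrite /bc eP Ep_split // /qbinom hk.
move: hE; rewrite Ep_split // => hE.
have hB : \prod_(t < k) (1 - y ^+ t.+1) != 0 by move: hE; rewrite mulf_eq0 negb_or => /andP[].
have hQnk : qpoch q q (n - k) != 0 by apply: (qpoch_neq0 hq); rewrite leq_subr.
have hs : (-1) ^+ k * q ^+ 'C(k.+1, 2) != 0 :> F.
  by rewrite mulf_neq0 ?expf_neq0 // oppr_eq0 oner_neq0.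
have key : qpoch q q k = \prod_(t < k) (1 - y ^+ t.+1) * ((-1) ^+ k * q ^+ 'C(k.+1, 2)).
  rewrite -sign_prod /qpoch -big_split /=; apply: eq_bigr => t _.
  rewrite mulrN mulrBl mul1r mulrC -exprMn.
  by rewrite (mulrC y) hqy expr1n opprB exprSr.
move: hs; rewrite key; set s := _ * _ => hs; field.
by rewrite hs hQnk hB.
Qed.

End Helpers.


Theorem corollary3p1 (F : fieldType) (q z : F) (n m : nat)
  (hmn : (m <= n)%N)
  (hq0 : q != 0) (hz0 : z != 0)
  (hq : forall j : nat, (0 < j <= n)%N -> q ^+ j != 1)
  (hzq : forall k : nat, (k < n)%N -> z * q ^ (k%:Z - m%:Z) != 1) :
  \sum_(0 <= k < n.+1 | k != m)
     qbinom q n k * (qpoch (q / z) q k * qpoch z q (n - k))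
       / (1 - q ^ (k%:Z - m%:Z)) * z ^+ k
  = (-1) ^+ m * q ^+ 'C(m.+1, 2) * qbinom q n m * qpoch (z * q ^ (- m%:Z)) q n
    * (\sum_(0 <= k < n) (z * q ^ (k%:Z - m%:Z)) / (1 - z * q ^ (k%:Z - m%:Z))
       - \sum_(0 <= k < n.+1 | k != m) q ^ (k%:Z - m%:Z) / (1 - q ^ (k%:Z - m%:Z))).
Proof.
set y := q^-1.
have hqy : q * y = 1 by rewrite /y mulfV.
have hmz : q ^ (- m%:Z) = y ^+ m by rewrite -exprnN /y exprVn.
have hpow : forall k : nat, q ^ (k%:Z - m%:Z) = q ^+ k * y ^+ m.
  by move=> k; rewrite expfzDr // hmz.
have hm1 : (m < n.+1)%N by rewrite ltnS.
pose mo := Ordinal hm1.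
have hz : forall i : nat, (i < n)%N -> 1 - z * q ^+ i * y ^+ mo != 0.
  by move=> i hi; rewrite subr_eq0 eq_sym -mulrA /= -hpow; exact: hzq.
have L : \sum_(0 <= k < n.+1 | k != m)
     qbinom q n k * (qpoch (q / z) q k * qpoch z q (n - k))
       / (1 - q ^ (k%:Z - m%:Z)) * z ^+ k
   = qpoch q q n * \sum_(k < n.+1 | k != mo) bc q z y k / (1 - q ^+ k * y ^+ mo).
  rewrite big_mkord mulr_sumr; apply: eq_big => // k _.
  rewrite hpow [RHS]mulrA bc_closed // /=; ring.
rewrite L main_id // mulrA bc_m //= -hmz.
congr (_ * (_ - _)).
  by rewrite big_mkord hmz; apply: eq_bigr => i _; rewrite hpow mulrA.
by rewrite big_mkord hmz; apply: eq_big => // k _; rewrite hpow.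
Qed.
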